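(* Let $g_1(s),\dots,g_n(s)$ and $f(s)$ be rational transfer functions such that there is $\gamma>0$ with $\mathrm{Re}(g_i(s))\ge\frac1\gamma|g_i(s)|^2$ for all $\mathrm{Re}(s)>0$ and all $i$, and $f$ is positive real ($\mathrm{Re}(f(s))>0$ for $\mathrm{Re}(s)>0$, $\mathrm{Im}(f(s))=0$ for $\mathrm{Re}(s)=0$). Then for any $V_k\in\mathbb{R}^{n\times k}$ with $V_k^TV_k=I$ and any symmetric $\Lambda_k\succeq0$, the transfer matrix $$T(s)=V_k\big(V_k^T\mathrm{diag}\{g_i^{-1}(s)\}V_k+f(s)\Lambda_k\big)^{-1}V_k^T$$ satisfies $\|T(s)\|_{\mathcal{H}_\infty}\le\gamma$.
   Context: $\|T\|_{\mathcal{H}_\infty}=\sup_{\mathrm{Re}(s)>0}\|T(s)\|$, with $\|\cdot\|$ the spectral norm. *)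

(* Defs.v *)
From HB Require Import structures.
From mathcomp Require Import all_boot all_order all_algebra.
From mathcomp Require Export complex.
Set Implicit Arguments. Unset Strict Implicit. Unset Printing Implicit Defensive.
Import Order.TTheory GRing.Theory Num.Theory.
Local Open Scope ring_scope.
Local Open Scope complex_scope.

Definition rat_eval (R : rcfType) (p q : {poly R}) (s : R[i]) : R[i] :=
  (map_poly (real_complex R) p).[s] / (map_poly (real_complex R) q).[s].

Definition cabs (R : rcfType) (z : R[i]) : R := Num.sqrt (complex.Re z ^+ 2 + complex.Im z ^+ 2).

Definition vnorm (R : rcfType) (m : nat) (x : 'cV[R[i]]_m) : R :=
  Num.sqrt (\sum_(i < m) cabs (x i 0) ^+ 2).

Definition spec_norm_le (R : rcfType) (m p : nat) (M : 'M[R[i]]_(m, p)) (c : R) : Prop :=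
  forall x : 'cV[R[i]]_p, vnorm (M *m x) <= c * vnorm x.

Definition psd (R : rcfType) (k : nat) (L : 'M[R]_k) : Prop :=
  L^T = L /\ forall x : 'cV[R]_k, 0 <= (x^T *m L *m x) 0 0.

Definition Tmat (R : rcfType) (n k : nat)
  (pg qg : 'I_n -> {poly R}) (pf qf : {poly R})
  (V : 'M[R]_(n, k)) (Lam : 'M[R]_k) (s : R[i]) : 'M[R[i]]_n :=
  let Vc := map_mx (real_complex R) V in
  let D := diag_mx (\row_i (rat_eval (pg i) (qg i) s)^-1) in
  Vc *m invmx (Vc^T *m D *m Vc + rat_eval pf qf s *: map_mx (real_complex R) Lam) *m Vc^T.

(* ||T||_{H_infinity} <= c, i.e. sup_{Re s > 0} ||T(s)|| <= c, where the sup is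
   over the points where T(s) is given by the formula (all g_i(s) <> 0). *)
Definition hinf_le (R : rcfType) (n : nat) (defined : R[i] -> Prop)
  (T : R[i] -> 'M[R[i]]_n) (c : R) : Prop :=
  forall s : R[i], 0 < complex.Re s -> defined s -> spec_norm_le (T s) c.

(* Main.v *)
Require Import Defs.
From HB Require Import structures.
From mathcomp Require Import all_boot all_order all_algebra.
From mathcomp Require Import complex.
From mathcomp Require Import ring lra.
Set Implicit Arguments. Unset Strict Implicit.
Import Order.TTheory GRing.Theory Num.Theory.
Local Open Scope ring_scope.
Local Open Scope complex_scope.

Section S.
Variable R : rcfType.
Local Notation C := R[i].

Lemma ReD (x y : C) : complex.Re (x + y) = complex.Re x + complex.Re y.
Proof. by case: x; case: y. Qed.
Lemma ImD (x y : C) : complex.Im (x + y) = complex.Im x + complex.Im y.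
Proof. by case: x; case: y. Qed.
Lemma ReN (x : C) : complex.Re (- x) = - complex.Re x.
Proof. by case: x. Qed.
Lemma ReM (x y : C) : complex.Re (x * y) = complex.Re x * complex.Re y - complex.Im x * complex.Im y.
Proof. by case: x; case: y. Qed.
Lemma ImM (x y : C) : complex.Im (x * y) = complex.Re x * complex.Im y + complex.Im x * complex.Re y.
Proof. by case: x => a b; case: y => c d /=; rewrite addrC. Qed.
Lemma Re_conj (x : C) : complex.Re (x^*) = complex.Re x. Proof. by case: x. Qed.
Lemma Im_conj (x : C) : complex.Im (x^*) = - complex.Im x. Proof. by case: x. Qed.
Lemma Re_rc (a : R) : complex.Re (a%:C) = a. Proof. by []. Qed.
Lemma Im_rc (a : R) : complex.Im (a%:C) = 0. Proof. by []. Qed.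
Lemma Re_sum (I : Type) (r : seq I) (P : pred I) (F : I -> C) :
  complex.Re (\sum_(i <- r | P i) F i) = \sum_(i <- r | P i) complex.Re (F i).
Proof. by apply: (big_morph _ ReD). Qed.
Lemma ReV (x : C) : complex.Re (x^-1) = complex.Re x / (complex.Re x ^+ 2 + complex.Im x ^+ 2).
Proof. by case: x. Qed.

Definition adj m p (A : 'M[C]_(m, p)) : 'M[C]_(p, m) := (map_mx (@conjc R) A)^T.
Definition nsq (c : C) : R := complex.Re c ^+ 2 + complex.Im c ^+ 2.
Definition NN m (x : 'cV[C]_m) : R := \sum_i nsq (x i 0).
Local Notation rc := (real_complex R).

Lemma nsq_ge0 c : 0 <= nsq c.
Proof. by rewrite /nsq addr_ge0 ?sqr_ge0. Qed.

Lemma NN_ge0 m (x : 'cV[C]_m) : 0 <= NN x.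
Proof. by apply: sumr_ge0 => i _; apply: nsq_ge0. Qed.

Lemma vnormE m (x : 'cV[C]_m) : vnorm x = Num.sqrt (NN x).
Proof.
rewrite /vnorm /NN; congr Num.sqrt; apply: eq_bigr => i _.
by rewrite /cabs sqr_sqrtr // nsq_ge0.
Qed.

Lemma NN_eq0 m (x : 'cV[C]_m) : NN x = 0 -> x = 0.
Proof.
move/eqP; rewrite psumr_eq0; last by move=> i _; apply: nsq_ge0.
move/allP => H; apply/matrixP => i j; rewrite (ord1 j) mxE.
have /H/implyP := mem_index_enum i; move/(_ isT).
rewrite /nsq paddr_eq0 ?sqr_ge0 // !sqrf_eq0 => /andP[/eqP a /eqP b].
by move: (x i 0) a b => [u v] /= -> ->.
Qed.

Lemma ipE m (x y : 'cV[C]_m) : (adj x *m y) 0 0 = \sum_i (x i 0)^* * y i 0.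
Proof. by rewrite !mxE; apply: eq_bigr => i _; rewrite !mxE. Qed.

Lemma NN_ip m (x : 'cV[C]_m) : NN x = complex.Re ((adj x *m x) 0 0).
Proof.
rewrite ipE Re_sum; apply: eq_bigr => i _.
move: (x i 0) => [u v]; rewrite /nsq /=. ring.
Qed.

Lemma NN_comb m (a : R) (z y : 'cV[C]_m) :
  NN (a%:C *: z - y) = a ^+ 2 * NN z - 2%:R * a * complex.Re ((adj z *m y) 0 0) + NN y.
Proof.
rewrite ipE Re_sum /NN mulr_sumr mulr_sumr -sumrN -!big_split /=.
apply: eq_bigr => i _; rewrite !mxE.
move: (z i 0) (y i 0) => [u v] [p q]; rewrite /nsq /=.
ring.
Qed.

Lemma adjM m p q (A : 'M[C]_(m, p)) (B : 'M[C]_(p, q)) : adj (A *m B) = adj B *m adj A.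
Proof. by rewrite /adj map_mxM trmx_mul. Qed.

Lemma adj_real m p (A : 'M[R]_(m, p)) : adj (map_mx rc A) = (map_mx rc A)^T.
Proof.
by rewrite /adj; congr trmx; apply/matrixP => i j; rewrite !mxE conjc_real.
Qed.


Lemma cdecomp m p (z : 'M[C]_(m, p)) :
  z = map_mx rc (map_mx (@complex.Re R) z) + 'i *: map_mx rc (map_mx (@complex.Im R) z).
Proof.
apply/matrixP => i j; rewrite !mxE; move: (z i j) => [u v].
by apply/eqP; rewrite eq_complex /=; apply/andP; split; apply/eqP; ring.
Qed.

Lemma adj_dec m p (a b : 'M[R]_(m, p)) :
  adj (map_mx rc a + 'i *: map_mx rc b) = (map_mx rc a)^T - 'i *: (map_mx rc b)^T.
Proof.
apply/matrixP => i j; rewrite !mxE; move: (a j i) (b j i) => u v.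
by apply/eqP; rewrite eq_complex /=; apply/andP; split; apply/eqP; ring.
Qed.

Lemma mx11_tr (A : 'M[C]_1) : A^T = A.
Proof. by apply/matrixP => i j; rewrite (ord1 i) (ord1 j) mxE. Qed.

Lemma realq m p q r (a : 'M[R]_(p, m)) (L : 'M[R]_(p, q)) (b : 'M[R]_(q, r)) :
  (map_mx rc a)^T *m map_mx rc L *m map_mx rc b = map_mx rc (a^T *m L *m b).
Proof. by rewrite !map_mxM map_trmx. Qed.

Lemma quadL m (L : 'M[R]_m) (a b : 'cV[R]_m) : L^T = L ->
  let z := map_mx rc a + 'i *: map_mx rc b in
  (adj z *m map_mx rc L *m z) 0 0 = ((a^T *m L *m a) 0 0 + (b^T *m L *m b) 0 0)%:C.
Proof.
move=> hL z; rewrite /z adj_dec.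
have e3 : (map_mx rc b)^T *m map_mx rc L *m map_mx rc a =
          (map_mx rc a)^T *m map_mx rc L *m map_mx rc b.
  by rewrite -[LHS]mx11_tr !trmx_mul trmxK !map_trmx hL mulmxA.
rewrite mulmxBl !mulmxDr !mulmxBl -!scalemxAl -!scalemxAr e3.
rewrite !realq.
set s1 := (a^T *m L *m a); set s4 := (b^T *m L *m b); set s2 := (a^T *m L *m b).
rewrite !mxE; apply/eqP; rewrite eq_complex /=; apply/andP; split; apply/eqP; ring.
Qed.



Lemma quad_psd m (L : 'M[R]_m) (z : 'cV[C]_m) : psd L ->
  exists2 r : R, 0 <= r & (adj z *m map_mx rc L *m z) 0 0 = r%:C.
Proof.
move=> [hL hpos]; rewrite [z]cdecomp quadL //.
by eexists; last reflexivity; rewrite addr_ge0.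
Qed.

Lemma diag_re m (w : 'cV[C]_m) (d : 'rV[C]_m) (c : R) :
  (forall i, c <= complex.Re (d 0 i)) ->
  c * NN w <= complex.Re ((adj w *m diag_mx d *m w) 0 0).
Proof.
move=> hd; rewrite mul_mx_diag !mxE Re_sum /NN mulr_sumr; apply: ler_sum => i _.
rewrite !mxE.
have -> : complex.Re ((w i 0)^* * d 0 i * w i 0) = complex.Re (d 0 i) * nsq (w i 0).
  by move: (w i 0) (d 0 i) => [u v] [p q]; rewrite /nsq /=; ring.
by apply: ler_wpM2r; [apply: nsq_ge0 | apply: hd].
Qed.

Lemma VcTVc n k (V : 'M[R]_(n, k)) : V^T *m V = 1%:M ->
  (map_mx rc V)^T *m map_mx rc V = 1%:M.
Proof. by move=> hV; rewrite map_trmx -map_mxM hV map_mx1. Qed.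

Lemma NN_iso n k (V : 'M[R]_(n, k)) (z : 'cV[C]_k) : V^T *m V = 1%:M ->
  NN (map_mx rc V *m z) = NN z.
Proof.
move=> hV; rewrite !NN_ip adjM adj_real -!mulmxA (mulmxA _ (map_mx rc V)) VcTVc //.
by rewrite mul1mx.
Qed.

Lemma NN_contr n k (V : 'M[R]_(n, k)) (x : 'cV[C]_n) : V^T *m V = 1%:M ->
  NN ((map_mx rc V)^T *m x) <= NN x.
Proof.
move=> hV; set y := (map_mx rc V)^T *m x.
have := NN_ge0 (1%:C *: (map_mx rc V *m y) - x).
rewrite NN_comb NN_iso // adjM adj_real -mulmxA -/y -NN_ip.
move=> h; have := NN_ge0 y; lra.
Qed.

Lemma keyM n k (V : 'M[R]_(n, k)) (L : 'M[R]_k) (d : 'rV[C]_n) (f : C) (c : R)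
  (z : 'cV[C]_k) :
  V^T *m V = 1%:M -> psd L -> 0 <= complex.Re f -> (forall i, c <= complex.Re (d 0 i)) ->
  c * NN z <= complex.Re ((adj z *m ((map_mx rc V)^T *m diag_mx d *m map_mx rc V
                                     + f *: map_mx rc L) *m z) 0 0).
Proof.
move=> hV hL hf hd; rewrite mulmxDr mulmxDl mxE ReD.
have h1 : c * NN z <= complex.Re ((adj z *m ((map_mx rc V)^T *m diag_mx d *m map_mx rc V) *m z) 0 0).
  have := diag_re (map_mx rc V *m z) hd.
  by rewrite NN_iso // adjM adj_real !mulmxA.
have h2 : 0 <= complex.Re ((adj z *m (f *: map_mx rc L) *m z) 0 0).
  rewrite -scalemxAr -scalemxAl mxE.
  have [r r0 ->] := quad_psd z hL.
  by rewrite ReM /= mulr0 subr0 mulr_ge0.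
lra.
Qed.

Lemma unit_of_inj m (M : 'M[C]_m) : (forall z : 'cV[C]_m, M *m z = 0 -> z = 0) ->
  M \in unitmx.
Proof.
move=> H; rewrite unitmxE unitfE -det_tr; apply/negP => /det0P [v nz hv].
move/eqP: nz; apply; have := H v^T; rewrite -[M]trmxK -trmx_mul hv trmx0.
by move=> /(_ erefl) /(congr1 trmx); rewrite trmxK trmx0.
Qed.

Lemma ReinvG (g : C) (gam : R) : 0 < gam -> g != 0 ->
  gam^-1 * cabs g ^+ 2 <= complex.Re g -> gam^-1 <= complex.Re (g^-1).
Proof.
move=> hg gn0; rewrite /cabs sqr_sqrtr ?addr_ge0 ?sqr_ge0 // ReV => h.
have sp : 0 < complex.Re g ^+ 2 + complex.Im g ^+ 2.
  rewrite lt0r addr_ge0 ?sqr_ge0 // andbT; apply: contra gn0.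
  rewrite paddr_eq0 ?sqr_ge0 // !sqrf_eq0; move: g {h} => [u v] /andP[/eqP /= -> /eqP ->].
  by [].
by rewrite ler_pdivlMr.
Qed.

End S.

Unset Implicit Arguments.
Unset Strict Implicit.

Theorem lemma5 (R : rcfType) (n k : nat)
  (pg qg : 'I_n -> {poly R}) (pf qf : {poly R}) (gamma : R)
  (V : 'M[R]_(n, k)) (Lam : 'M[R]_k) :
  (forall i, qg i != 0) -> qf != 0 ->
  (forall i (s : R[i]), 0 < complex.Re s -> (map_poly (real_complex R) (qg i)).[s] != 0) ->
  0 < gamma ->
  (forall i (s : R[i]), 0 < complex.Re s ->
     complex.Re (rat_eval (pg i) (qg i) s) >= gamma^-1 * cabs (rat_eval (pg i) (qg i) s) ^+ 2) ->
  (forall s : R[i], 0 < complex.Re s -> complex.Re (rat_eval pf qf s) > 0) ->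
  (forall s : R[i], complex.Re s = 0 -> complex.Im (rat_eval pf qf s) = 0) ->
  V^T *m V = 1%:M ->
  psd Lam ->
  hinf_le (fun s => forall i, rat_eval (pg i) (qg i) s != 0)
          (Tmat pg qg pf qf V Lam) gamma.
Proof.
move=> _ _ _ hgam hg hf _ hV hL s hs hdef x.
rewrite /Tmat /=.
set d := \row_i (rat_eval (pg i) (qg i) s)^-1.
set f := rat_eval pf qf s.
set Vc := map_mx (real_complex R) V.
set M := Vc^T *m diag_mx d *m Vc + f *: map_mx (real_complex R) Lam.
have hd : forall i, gamma^-1 <= complex.Re (d 0 i).
  by move=> i; rewrite mxE; apply: ReinvG => //; apply: hg.
have hf0 : 0 <= complex.Re f by apply/ltW/hf.
have key : forall z, gamma^-1 * NN z <= complex.Re ((adj z *m M *m z) 0 0).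
  by move=> z; apply: keyM.
have ig : 0 < gamma^-1 by rewrite invr_gt0.
have uM : M \in unitmx.
  apply: unit_of_inj => z hz; apply: NN_eq0.
  have := key z; rewrite -mulmxA hz mulmx0 mxE /= => h.
  have := NN_ge0 z; move: h; rewrite pmulr_rle0 //; lra.
set y := Vc^T *m x.
set z := invmx M *m y.
have -> : Vc *m invmx M *m Vc^T *m x = Vc *m z by rewrite /z /y !mulmxA.
have hMz : M *m z = y by rewrite /z mulKVmx.
have h1 : NN y <= NN x by apply: NN_contr.
have h2 : gamma^-1 * NN z <= complex.Re ((adj z *m y) 0 0).
  by rewrite -hMz mulmxA; apply: key.
have h3 := NN_ge0 (gamma^-1%:C *: z - y).
rewrite NN_comb in h3.
have h4 : gamma^-1 ^+ 2 * NN z <= NN x.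
  have : 2%:R * gamma^-1 * (gamma^-1 * NN z) <= 2%:R * gamma^-1 * complex.Re ((adj z *m y) 0 0).
    by apply: ler_wpM2l => //; rewrite mulr_ge0 // ltW.
  move=> h5; rewrite expr2; lra.
have h6 : NN z <= gamma ^+ 2 * NN x.
  have -> : NN z = gamma ^+ 2 * (gamma^-1 ^+ 2 * NN z).
    by rewrite mulrA -exprMn mulfV ?gt_eqF // expr1n mul1r.
  by apply: ler_wpM2l => //; rewrite sqr_ge0.
rewrite !vnormE NN_iso // -(ger0_norm (ltW hgam)) -sqrtr_sqr -sqrtrM ?sqr_ge0 //.
by rewrite ler_sqrt // mulr_ge0 ?sqr_ge0 ?NN_ge0.
Qed.
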